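(* Let $\mathcal{S}$ be a finite skew translation generalized quadrangle of order $s$ with $s$ even, with elation group $G$ and associated $4$-gonal family $(G,\{A_i\}_{i=0}^s,\{A_i^*\}_{i=0}^s)$, and let $U_0:=\bigcap_{i=0}^s A_i^*$. Let $0\le i,j\le s$. Then: (1) if $g\in U_0$, then $|A_i^*\cap gG'|=|G'|$, and $|A_i\cap gG'|$ equals $1$ if $g\in G'$ and $0$ otherwise; (2) if $g\in U_0$, then $|A_i^*\cap g^G|=|g^G|$, and $|A_i\cap g^G|$ equals $1$ if $g=1$ and $0$ otherwise; (3) if $g\in A_j^*\setminus U_0$, then $|A_i^*\cap g^G|$ equals $|g^G|$ if $i=j$ and $0$ otherwise.
   Context: A generalized quadrangle of order $s$: each line has $s+1$ points, each point is on $s+1$ lines, and for each non-incident point-line pair $(P,\ell)$ there is a unique point on $\ell$ collinear with $P$. An elation about $P$ is an automorphism that is the identity or fixes each line through $P$ and no point not collinear with $P$; a symmetry about $P$ is an elation about $P$ fixing every point collinear with $P$. $\mathcal{S}$ is an elation generalized quadrangle with base point $P$ and elation group $G$ if $G$ consists of elations about $P$ and acts regularly on the points not collinear with $P$; it is a skew translation generalized quadrangle if $G$ contains a subgroup of $s$ symmetries about $P$. The associated $4$-gonal family: fix a point $y$ not collinear with $P$, let $M_0,\dots,M_s$ be the lines through $y$, let $z_i$ be the unique point of $M_i$ collinear with $P$, and let $A_i$, $A_i^*$ be the stabilizers in $G$ of $M_i$ and $z_i$ respectively. $g^G$ denotes the conjugacy class of $g$ and $G'$ the derived subgroup. *)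

(* Defs.v *)
From HB Require Import structures.
From mathcomp Require Import all_boot all_fingroup.
Set Implicit Arguments. Unset Strict Implicit. Unset Printing Implicit Defensive.

(* Automorphisms (collineations) are pairs (permutation of points,
   permutation of lines) preserving incidence; they live in the
   finGroupType  aut_type P L := {perm P} * {perm L}  (direct product). *)

Notation aut_type P L := ({perm P} * {perm L})%type.

Section GQ.
Variables (P L : finType) (I : P -> L -> bool).

(* collinearity (reflexive: every point is collinear with itself) *)
Definition coll (p q : P) : bool := [exists l, I p l && I q l].

Definition is_GQ (s : nat) : Prop :=
  [/\ 0 < s,
      forall l : L, #|[set p | I p l]| = s.+1,
      forall p : P, #|[set l | I p l]| = s.+1,
      forall (p q : P) (l m : L), p != q -> I p l -> I q l -> I p m -> I q m -> l = m
    & forall (p : P) (l : L), ~~ I p l -> #|[set q | I q l && coll p q]| = 1].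

Definition is_aut (g : aut_type P L) : bool :=
  [forall p, forall l, I (g.1 p) (g.2 l) == I p l].

Definition elation (x : P) (g : aut_type P L) : bool :=
  is_aut g &&
  ((g == 1)%g ||
   ([forall l, I x l ==> (g.2 l == l)] && [forall p, ~~ coll x p ==> (g.1 p != p)])).

Definition symmetry (x : P) (g : aut_type P L) : bool :=
  elation x g && [forall p, coll x p ==> (g.1 p == p)].

Definition is_EGQ (s : nat) (x : P) (G : {group aut_type P L}) : Prop :=
  [/\ is_GQ s,
      {in G, forall g, elation x g}
    & forall p q : P, ~~ coll x p -> ~~ coll x q ->
        #|[set g in G | g.1 p == q]| = 1].

Definition is_STGQ (s : nat) (x : P) (G : {group aut_type P L}) : Prop :=
  is_EGQ s x G /\
  exists H : {group aut_type P L},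
    [/\ H \subset G, #|H| = s & {in H, forall g, symmetry x g}].

(* 4-gonal family associated with the point y (not collinear with x):
   for a line M through y, foot x M is the unique point of M collinear
   with x, A_M the stabilizer of M in G, A*_M the stabilizer of foot x M. *)
Definition foot (x : P) (M : L) : P := odflt x [pick z | I z M && coll x z].

Definition Astab (G : {set aut_type P L}) (M : L) : {set aut_type P L} :=
  [set g in G | g.2 M == M].

Definition Astar (G : {set aut_type P L}) (x : P) (M : L) : {set aut_type P L} :=
  [set g in G | g.1 (foot x M) == foot x M].

Definition U0 (G : {set aut_type P L}) (x y : P) : {set aut_type P L} :=
  \bigcap_(M | I y M) Astar G x M.

End GQ.

(* Main.v *)
Require Import Defs.
From HB Require Import structures.
From mathcomp Require Import all_boot all_fingroup all_solvable.
Set Implicit Arguments. Unset Strict Implicit. Unset Printing Implicit Defensive.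

Lemma card_bigcup_seq (I : finType) (T : finType) (r : seq I) (F : I -> {set T}) :
  uniq r -> {in r &, forall i j, i != j -> [disjoint F i & F j]} ->
  #|\bigcup_(i <- r) F i| = \sum_(i <- r) #|F i|.
Proof.
elim: r => [|a r IH] /=; first by rewrite !big_nil cards0.
move=> /andP[ar ur] dis; rewrite !big_cons cardsU.
have -> : F a :&: \bigcup_(i <- r) F i = set0.
  apply/setP => t; rewrite !inE; apply/negbTE/negP => /andP[ta].
  rewrite bigcup_seq => /bigcupP[j jr tj].
  have : [disjoint F a & F j].
    apply: dis; rewrite ?inE ?eqxx ?jr ?orbT //.
    by apply: contraNneq ar => ->.
  by move/disjointFr => /(_ _ ta); rewrite tj.
rewrite cards0 subn0 IH //.
by move=> i j ir jr; apply: dis; rewrite inE ?ir ?jr orbT.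
Qed.

Lemma card_bigcup_le (I : finType) (T : finType) (r : seq I) (F : I -> {set T}) :
  #|\bigcup_(i <- r) F i| <= \sum_(i <- r) #|F i|.
Proof.
elim: r => [|a r IH] /=; first by rewrite !big_nil cards0.
rewrite !big_cons; apply: leq_trans (leq_card_setU _ _) _.
by rewrite leq_add2l.
Qed.

Lemma card_bigcup_in_le (I T : finType) (A : {set I}) (F : I -> {set T}) :
  #|\bigcup_(i in A) F i| <= \sum_(i in A) #|F i|.
Proof.
rewrite -[\bigcup_(i in A) F i]big_enum -[\sum_(i in A) _]big_enum.
exact: card_bigcup_le.
Qed.

Lemma card_bigcup_in (I T : finType) (A : {set I}) (F : I -> {set T}) :
  {in A &, forall i j, i != j -> [disjoint F i & F j]} ->
  #|\bigcup_(i in A) F i| = \sum_(i in A) #|F i|.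
Proof.
move=> dis.
rewrite -[\bigcup_(i in A) F i]big_enum -[\sum_(i in A) _]big_enum.
apply: card_bigcup_seq; first exact: enum_uniq.
by move=> i j; rewrite !mem_enum; apply: dis.
Qed.

Lemma centsMr (gT : finGroupType) (X Y Z : {set gT}) :
  X \subset ('C(Y))%g -> X \subset ('C(Z))%g -> X \subset ('C(Y * Z))%g.
Proof.
move=> /centsP cY /centsP cZ; apply/centsP => a aX b /mulsgP[y z yY zZ ->].
exact: commuteM (cY a aX y yY) (cZ a aX z zZ).
Qed.

From mathcomp Require Import zify.

Section Geo.
Variables (P L : finType) (I : P -> L -> bool) (s : nat).
Hypothesis GQ : is_GQ I s.

Local Notation coll := (coll I).

Lemma s_gt0 : 0 < s. Proof. by case: GQ. Qed.
Lemma linesz l : #|[set p | I p l]| = s.+1. Proof. by case: GQ. Qed.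
Lemma ptsz p : #|[set l | I p l]| = s.+1. Proof. by case: GQ. Qed.
Lemma uniqL p q l m : p != q -> I p l -> I q l -> I p m -> I q m -> l = m.
Proof. by case: GQ => _ _ _ H _; apply: H. Qed.
Lemma ax5 p l : ~~ I p l -> #|[set q | I q l && coll p q]| = 1.
Proof. by case: GQ => _ _ _ _ H; apply: H. Qed.

Lemma ax5P p l q1 q2 : ~~ I p l -> I q1 l -> coll p q1 -> I q2 l -> coll p q2 -> q1 = q2.
Proof.
move=> npl h1 c1 h2 c2; have /eqP/cards1P[a Ha] := ax5 npl.
have : q1 \in [set q | I q l && coll p q] by rewrite inE h1 c1.
have : q2 \in [set q | I q l && coll p q] by rewrite inE h2 c2.
by rewrite Ha !inE => /eqP-> /eqP->.
Qed.

Lemma ax5E p l : ~~ I p l -> exists2 q, I q l & coll p q.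
Proof.
move=> npl; have /eqP/cards1P[a Ha] := ax5 npl.
have : a \in [set q | I q l && coll p q] by rewrite Ha set11.
by rewrite inE => /andP[]; exists a.
Qed.

Lemma collP p q : reflect (exists2 l, I p l & I q l) (coll p q).
Proof.
apply: (iffP existsP) => [[l /andP[a b]]|[l a b]]; first by exists l.
by exists l; rewrite a b.
Qed.

Lemma coll_sym p q : coll p q = coll q p.
Proof. by apply/collP/collP => -[l a b]; exists l. Qed.

Lemma coll_on p q l : I p l -> I q l -> coll p q.
Proof. by move=> a b; apply/collP; exists l. Qed.

Lemma exists_line p : exists l, I p l.
Proof.
have : 0 < #|[set l | I p l]| by rewrite ptsz.
by case/card_gt0P => l; rewrite inE; exists l.
Qed.

Lemma coll_refl p : coll p p.
Proof. by have [l pl] := exists_line p; apply/collP; exists l. Qed.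

Lemma big_minus (T : finType) (A : {set T}) a : #|A| = s.+1 -> exists2 b, b \in A & b != a.
Proof.
move=> cA; have := cardsD1 a A; rewrite cA => e.
have : 0 < #|A :\ a| by have := s_gt0; case: (a \in A) e => /= e; lia.
by case/card_gt0P => b; rewrite !inE => /andP[ba bA]; exists b.
Qed.

Lemma other_line p l : exists2 m, I p m & m != l.
Proof. by have [m] := big_minus l (ptsz p); rewrite inE; exists m. Qed.

Lemma other_point l p : exists2 q, I q l & q != p.
Proof. by have [q] := big_minus p (linesz l); rewrite inE; exists q. Qed.

Lemma card_minus (T : finType) (A : {set T}) a : #|A| = s.+1 -> a \in A -> #|A :\ a| = s.
Proof. by move=> cA aA; have := cardsD1 a A; rewrite cA aA /= => -[]. Qed.

Lemma autI g p l : is_aut I g -> I (g.1 p) (g.2 l) = I p l.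
Proof. by move/forallP/(_ p)/forallP/(_ l)/eqP. Qed.

Lemma autC g p q : is_aut I g -> coll (g.1 p) (g.1 q) = coll p q.
Proof.
move=> ga; apply/collP/collP => [[l a b]|[l a b]].
  by exists ((g.2^-1)%g l); rewrite -(autI _ _ ga) permKV.
by exists (g.2 l); rewrite autI.
Qed.

End Geo.

Section Grp.
Variables (P L : finType) (I : P -> L -> bool) (s : nat).
Hypothesis GQ : is_GQ I s.
Variables (x : P) (G H : {group aut_type P L}).
Hypothesis elG : {in G, forall g, elation I x g}.
Hypothesis regG : forall p q : P, ~~ coll I x p -> ~~ coll I x q ->
        #|[set g in G | g.1 p == q]| = 1.
Hypotheses (HG : H \subset G) (cardH : #|H| = s)
           (symH : {in H, forall g, symmetry I x g}).

Local Notation coll := (coll I).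
Local Open Scope group_scope.

Lemma G_aut g : g \in G -> is_aut I g.
Proof. by move/elG/andP=> []. Qed.

Lemma G_line g l : g \in G -> I x l -> g.2 l = l.
Proof.
move=> gG xl; have /andP[_ /orP[/eqP->|/andP[/forallP fl _]]] := elG gG.
  by rewrite /= perm1.
by apply/eqP; apply: (implyP (fl l)).
Qed.

Lemma G_fix g p : g \in G -> ~~ coll x p -> g.1 p = p -> g = 1.
Proof.
move=> gG np e; have /andP[_ /orP[/eqP//|/andP[_ /forallP fp]]] := elG gG.
by have := implyP (fp p) np; rewrite e eqxx.
Qed.

Lemma G_x g : g \in G -> g.1 x = x.
Proof.
move=> gG; have [l1 xl1] := exists_line GQ x.
have [l2 xl2 ne] := other_line GQ x l1.
apply/eqP; apply/negPn/negP => ne'; move/negP: ne; apply; apply/eqP.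
have h1 : I (g.1 x) l1 by rewrite -(G_line gG xl1) autI // G_aut.
have h2 : I (g.1 x) l2 by rewrite -(G_line gG xl2) autI // G_aut.
exact: (uniqL GQ ne' h2 xl2 h1 xl1).
Qed.

Lemma G_coll g p : g \in G -> coll x (g.1 p) = coll x p.
Proof. by move=> gG; rewrite -{1}(G_x gG) autC // G_aut. Qed.

Lemma reg_ex p q : ~~ coll x p -> ~~ coll x q -> exists2 g, g \in G & g.1 p = q.
Proof.
move=> np nq; have /eqP/cards1P[a Ha] := regG np nq.
have : a \in [set g in G | g.1 p == q] by rewrite Ha set11.
by rewrite inE => /andP[aG /eqP]; exists a.
Qed.

Lemma reg_inj p g h : ~~ coll x p -> g \in G -> h \in G -> g.1 p = h.1 p -> g = h.
Proof.
move=> np gG hG e.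
have nq : ~~ coll x (g.1 p) by rewrite G_coll.
have /eqP/cards1P[a Ha] := regG np nq.
have : g \in [set k in G | k.1 p == g.1 p] by rewrite inE gG eqxx.
have : h \in [set k in G | k.1 p == g.1 p] by rewrite inE hG e eqxx.
by rewrite Ha !inE => /eqP-> /eqP->.
Qed.

Lemma H_fix h p : h \in H -> coll x p -> h.1 p = p.
Proof. by move/symH/andP=> [_ /forallP/(_ p)/implyP] f /f /eqP. Qed.

Lemma HinG h : h \in H -> h \in G.
Proof. by move/(subsetP HG). Qed.

Lemma permV1 (T : finType) (f : {perm T}) a : f a = a -> f^-1 a = a.
Proof. by move=> e; rewrite -{1}e permK. Qed.

Lemma key1 p M M' z' g : ~~ coll x p -> I p M -> I p M' -> M != M' ->
  I z' M' -> coll x z' -> g \in G -> g.2 M = M -> g.1 z' = z' -> g = 1.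
Proof.
move=> np pM pM' ne zM' cz gG gM gz.
have zp : z' != p by apply: contraNneq np => <-.
have nzM : ~~ I z' M.
  apply: contraNN ne => zM; apply/eqP; exact: (uniqL GQ zp zM pM zM' pM').
apply: (G_fix gG np); apply: (ax5P GQ nzM).
- by rewrite -gM autI // G_aut.
- by rewrite -gz autC ?G_aut // (coll_on zM' pM').
- done.
- exact: (coll_on zM' pM').
Qed.

Lemma key_lines z M : coll x z -> I z M -> ~~ I x M ->
  forall l, I z l -> ~~ I x l -> exists2 h, h \in H & h.2 M = l.
Proof.
move=> cz zM nxM l zl nxl.
have inj : {in H &, injective (fun h : aut_type P L => h.2 M)}.
  move=> h1 h2 h1H h2H /= e.
  have kH : h1 * h2^-1 \in H by rewrite groupM ?groupV.
  have kM : (h1 * h2^-1).2 M = M by rewrite /= permM e permK.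
  have [p pM pz] := other_point GQ M z.
  have np : ~~ coll x p.
    by apply: contra pz => cp; apply/eqP; apply: (ax5P GQ nxM).
  have [M' pM' ne] := other_line GQ p M.
  have nxM' : ~~ I x M' by apply: contra np => xM'; apply: coll_on xM' pM'.
  have [z' z'M' cz'] := ax5E GQ nxM'.
  rewrite eq_sym in ne.
  have := key1 np pM pM' ne z'M' cz' (HinG kH) kM (H_fix kH cz').
  by move/eqP; rewrite -eq_mulgV1 => /eqP.
have [N xN zN] : exists2 N, I x N & I z N by apply/collP.
set T := (fun h : aut_type P L => h.2 M) @: H.
set T' := [set m | I z m] :\ N.
have sTT : T \subset T'.
  apply/subsetP => m /imsetP[h hH ->]; rewrite !inE.
  rewrite -{1}(H_fix hH cz) autI ?G_aut ?HinG // zM andbT.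
  apply: contraNneq nxM => e.
  by rewrite -(autI x M (G_aut (HinG hH))) (G_x (HinG hH)) e.
have TT : T = T'.
  apply/eqP; rewrite eqEcard sTT /= card_in_imset // cardH.
  by rewrite (card_minus (ptsz GQ z)) // inE.
have : l \in T'.
  rewrite !inE zl andbT; by apply: contraNneq nxl => ->.
by rewrite -TT => /imsetP[h hH ->]; exists h.
Qed.

Lemma key2 p M M' z z' g : ~~ coll x p -> I p M -> I p M' -> M != M' ->
  I z M -> coll x z -> I z' M' -> coll x z' -> g \in G ->
  g.1 z = z -> g.1 z' = z' -> g \in H.
Proof.
move=> np pM pM' ne zM cz z'M' cz' gG gz gz'.
have nxM : ~~ I x M by apply: contra np => xM; apply: coll_on xM pM.
have ga := G_aut gG.
have zgM : I z (g.2 M) by rewrite -{1}gz autI.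
have nxgM : ~~ I x (g.2 M) by rewrite -{1}(G_x gG) autI.
have [h hH hM] := key_lines cz zM nxM zgM nxgM.
have kG : g * h^-1 \in G by rewrite groupM // groupV HinG.
have kM : (g * h^-1).2 M = M by rewrite /= permM -hM permK.
have kz : (g * h^-1).1 z' = z' by rewrite /= permM gz' permV1 // H_fix.
have := key1 np pM pM' ne z'M' cz' kG kM kz.
by move/eqP; rewrite -eq_mulgV1 => /eqP ->.
Qed.

End Grp.

Section Main.
Variables (P L : finType) (I : P -> L -> bool) (s : nat).
Hypothesis GQ : is_GQ I s.
Variables (x : P) (G H : {group aut_type P L}).
Hypothesis elG : {in G, forall g, elation I x g}.
Hypothesis regG : forall p q : P, ~~ coll I x p -> ~~ coll I x q ->
        #|[set g in G | g.1 p == q]| = 1.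
Hypotheses (HG : H \subset G) (cardH : #|H| = s)
           (symH : {in H, forall g, symmetry I x g}).
Variable y : P.
Hypothesis ny : ~~ coll I x y.

Local Notation coll := (coll I).
Local Open Scope group_scope.
Local Notation ft M := (foot I x M).
Local Notation Ast M := (Astar I G x M).
Local Notation Asb M := (Astab G M).

Let G_aut := G_aut elG.
Let G_line := G_line elG.
Let G_fix := G_fix elG.
Let G_x := G_x GQ elG.
Let G_coll := G_coll GQ elG.
Let reg_ex := reg_ex regG.
Let reg_inj := reg_inj GQ elG regG.
Let H_fix := H_fix symH.
Let HinG := HinG HG.
Let key1 := key1 GQ elG.
Let key2 := key2 GQ elG HG cardH symH.

Lemma nxM M : I y M -> ~~ I x M.
Proof. by move=> yM; apply: contra ny => xM; apply: coll_on xM yM. Qed.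

Lemma foot_spec M : I y M -> I (ft M) M /\ coll x (ft M).
Proof.
move=> yM; rewrite /foot; case: pickP => [z /andP[] //|none].
have [q qM cq] := ax5E GQ (nxM yM).
by have := none q; rewrite qM cq.
Qed.

Lemma foot_uniq M q : I y M -> I q M -> coll x q -> q = ft M.
Proof.
move=> yM qM cq; have [fM cf] := foot_spec yM.
exact: (ax5P GQ (nxM yM) qM cq fM cf).
Qed.

Lemma foot_ny M : I y M -> ft M != y.
Proof. by move=> yM; apply: contraNneq ny => <-; case: (foot_spec yM). Qed.

Lemma foot_nx M : I y M -> ft M != x.
Proof. by move=> yM; apply: contraNneq (nxM yM) => <-; case: (foot_spec yM). Qed.

Lemma inAstar M g : (g \in Ast M) = (g \in G) && (g.1 (ft M) == ft M).
Proof. by rewrite inE. Qed.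

Lemma inAstab M g : (g \in Asb M) = (g \in G) && (g.2 M == M).
Proof. by rewrite inE. Qed.

Lemma Astar_group M : group_set (Ast M).
Proof.
apply/group_setP; split; first by rewrite inAstar group1 /= perm1 eqxx.
move=> a b; rewrite !inAstar => /andP[aG /eqP az] /andP[bG /eqP bz].
by rewrite groupM //= permM az bz eqxx.
Qed.
Canonical AstarG M := Group (Astar_group M).

Lemma Astab_group M : group_set (Asb M).
Proof.
apply/group_setP; split; first by rewrite inAstab group1 /= perm1 eqxx.
move=> a b; rewrite !inAstab => /andP[aG /eqP az] /andP[bG /eqP bz].
by rewrite groupM //= permM az bz eqxx.
Qed.
Canonical AstabG M := Group (Astab_group M).

Lemma Astar_sub M : Ast M \subset G.
Proof. by apply/subsetP => g; rewrite inAstar => /andP[]. Qed.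

Lemma H_Astar M : I y M -> H \subset Ast M.
Proof.
move=> yM; apply/subsetP => h hH; rewrite inAstar HinG //=.
by rewrite H_fix //; case: (foot_spec yM).
Qed.

Lemma Astab_Astar M : I y M -> Asb M \subset Ast M.
Proof.
move=> yM; apply/subsetP => g; rewrite inAstab inAstar => /andP[gG /eqP gM].
rewrite gG /=; have [fM cf] := foot_spec yM; apply/eqP; apply: foot_uniq => //.
  by rewrite -[X in I _ X]gM autI ?G_aut.
by rewrite G_coll.
Qed.

Lemma other_yline M : I y M -> exists2 M', I y M' & M != M'.
Proof. by move=> yM; have [M' yM' ne] := other_line GQ y M; exists M'; rewrite // eq_sym. Qed.


Lemma Astab_U M M' g : I y M -> I y M' -> M != M' -> g \in Asb M -> g \in Ast M' -> g = 1.
Proof.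
move=> yM yM' ne; rewrite inAstab inAstar => /andP[gG /eqP gM] /andP[_ /eqP gz].
have [fM cf] := foot_spec yM'.
exact: (key1 ny yM yM' ne fM cf gG gM gz).
Qed.

Lemma HAstab M : I y M -> H :&: Asb M = 1.
Proof.
move=> yM; apply/eqP; rewrite eqEsubset sub1G andbT; apply/subsetP => g.
rewrite inE => /andP[gH gA]; have [M' yM' ne] := other_yline yM.
by rewrite (Astab_U yM yM' ne gA (subsetP (H_Astar yM') g gH)) group1.
Qed.

Lemma Astab_card M : I y M -> s <= #|Asb M|.
Proof.
move=> yM; have [fM cf] := foot_spec yM.
have <- : #|[set q | I q M] :\ ft M| = s by rewrite (card_minus (linesz GQ M)) // inE.
apply: leq_trans (leq_imset_card (fun g : aut_type P L => g.1 y) (Asb M)).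
apply: subset_leq_card; apply/subsetP => q; rewrite !inE => /andP[qf qM].
have nq : ~~ coll x q by apply: contra qf => cq; apply/eqP; apply: foot_uniq.
have [g gG gy] := reg_ex ny nq.
apply/imsetP; exists g => //; rewrite inAstab gG /=.
have [N xN zN] : exists2 N, I x N & I (ft M) N by apply/collP.
have nqN : ~~ I q N by apply: contra nq => qN; apply: coll_on xN qN.
have gz : g.1 (ft M) = ft M.
  apply: (ax5P GQ nqN) => //.
  - by rewrite -(G_line gG xN) autI ?G_aut.
  - by rewrite -gy autC ?G_aut // coll_sym (coll_on fM yM).
  - by rewrite (coll_on qM fM).
apply/eqP; apply: (uniqL GQ qf) => //.
- by rewrite -gy autI ?G_aut.
- by rewrite -{1}gz autI ?G_aut.
Qed.

Lemma Astar_card M : I y M -> s * s <= #|Ast M|.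
Proof.
move=> yM; have := mul_cardG H (AstabG M); rewrite (HAstab yM) cards1 muln1 cardH => e.
apply: leq_trans (leq_mul (leqnn s) (Astab_card yM)) _.
rewrite e; apply: subset_leq_card; apply: mul_subG; [exact: H_Astar | exact: Astab_Astar].
Qed.

Lemma AstarI M M' : I y M -> I y M' -> M != M' -> Ast M :&: Ast M' \subset H.
Proof.
move=> yM yM' ne; apply/subsetP => g; rewrite inE !inAstar => /andP[/andP[gG /eqP g1] /andP[_ /eqP g2]].
have [f1 c1] := foot_spec yM; have [f2 c2] := foot_spec yM'.
exact: (key2 ny yM yM' ne f1 c1 f2 c2 gG g1 g2).
Qed.

Lemma AstarIE M M' : I y M -> I y M' -> M != M' -> Ast M :&: Ast M' = H.
Proof.
move=> yM yM' ne; apply/eqP; rewrite eqEsubset AstarI //.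
by rewrite subsetI !H_Astar.
Qed.


Lemma G_card : #|G| <= (s * s * s)%N.
Proof.
have [N xN] := exists_line GQ x.
have -> : #|G| = #|(fun g : aut_type P L => g.1 y) @: G|.
  by rewrite card_in_imset // => g h gG hG; apply: reg_inj.
set U := \bigcup_(w in [set p | I p N] :\ x)
           \bigcup_(l in [set l | I w l] :\ N) ([set q | I q l] :\ w).
have sub : (fun g : aut_type P L => g.1 y) @: G \subset U.
  apply/subsetP => q /imsetP[g gG ->]; set q' := g.1 y.
  have nq : ~~ coll x q' by rewrite G_coll.
  have nqN : ~~ I q' N by apply: contra nq => qN; apply: coll_on xN qN.
  have [w wN cw] := ax5E GQ nqN.
  have wx : w != x by apply: contraNneq nq => e; rewrite coll_sym -e.
  case/collP: cw => l ql wl.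
  apply/bigcupP; exists w; first by rewrite !inE wx wN.
  apply/bigcupP; exists l.
    by rewrite !inE wl andbT; apply: contraNneq nqN => <-.
  rewrite !inE ql andbT; apply: contraNneq nq => ->.
  exact: coll_on xN wN.
apply: leq_trans (subset_leq_card sub) _.
apply: leq_trans (card_bigcup_in_le _ _) _.
have -> : (s * s * s = #|[set p | I p N] :\ x| * (s * s))%N.
  by rewrite (card_minus (linesz GQ N)) ?inE // mulnA.
rewrite -sum_nat_const; apply: leq_sum => w; rewrite !inE => /andP[_ wN].
apply: leq_trans (card_bigcup_in_le _ _) _.
have -> : (s * s = #|[set l | I w l] :\ N| * s)%N.
  by rewrite (card_minus (ptsz GQ w)) ?inE.
rewrite -sum_nat_const; apply: leq_sum => l; rewrite !inE => /andP[_ wl].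
by rewrite (card_minus (linesz GQ l)) ?inE.
Qed.

Lemma cover g : g \in G -> exists2 M, I y M & g \in Ast M.
Proof.
move=> gG; case: (pickP (fun M => I y M && (g \in Ast M))) => [M /andP[]|none].
  by exists M.
exfalso.
have [M0 yM0] := exists_line GQ y.
set B := \bigcup_(M in [set M | I y M]) (Ast M :\: H).
have gH : g \notin H.
  by apply: contraT => /negbNE gH; have := none M0; rewrite yM0 (subsetP (H_Astar yM0)).
have gB : g \notin B.
  apply/bigcupP => -[M]; rewrite inE => yM; rewrite in_setD => /andP[_ gM].
  by have := none M; rewrite yM gM.
have HB : H :&: B = set0.
  apply/setP => h; rewrite !inE; apply: negbTE; apply/andP => -[hH /bigcupP[M _]].
  by rewrite inE hH.
have cB : #|B| = \sum_(M in [set M | I y M]) #|Ast M :\: H|.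
  apply: card_bigcup_in => M M'; rewrite !inE => yM yM' ne.
  rewrite -setI_eq0; apply/eqP/setP => h; rewrite in_setI !in_setD in_set0.
  apply: negbTE; apply/andP => -[/andP[hH hM] /andP[_ hM']].
  have : h \in Ast M :&: Ast M' by rewrite in_setI hM hM'.
  by move/(subsetP (AstarI yM yM' ne)); rewrite (negbTE hH).
have cX : #|g |: (H :|: B)| = (1 + s + #|B|)%N.
  rewrite cardsU1 inE (negbTE gH) (negbTE gB) /= cardsU HB cards0 subn0 cardH.
  by rewrite addnA.
have sX : g |: (H :|: B) \subset G.
  apply/subsetP => h; rewrite !inE => /orP[/eqP->//|/orP[/HinG//|]].
  by case/bigcupP => M _; rewrite in_setD => /andP[_ /(subsetP (Astar_sub M))].
have lb : (s.+1 * (s * s - s) <= #|B|)%N.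
  rewrite cB -(ptsz GQ y) -sum_nat_const; apply: leq_sum => M; rewrite inE => yM.
  have := cardsID H (Ast M); rewrite (setIidPr (H_Astar yM)) cardH => e.
  by rewrite leq_subLR e; apply: Astar_card.
have := subset_leq_card sX; rewrite cX => h1.
have := G_card; have := s_gt0 GQ.
nia.
Qed.

Lemma conjAstar M a g : I y M -> a \in Ast M -> g \in G -> a ^ g \in Ast M.
Proof.
move=> yM aM gG.
have aG : a \in G by apply: (subsetP (Astar_sub M)).
have cG : a ^ g \in G by rewrite groupJ.
have [fM cf] := foot_spec yM.
set z := ft M in fM cf aM *.
have az : a.1 z = z by move: aM; rewrite inAstar => /andP[_ /eqP].
set w := g.1 z.
have cw : (a ^ g).1 w = w by rewrite conjgE /= !permM permK az.
have [M' yM' cM'] := cover cG.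
case: (eqVneq M M') => [-> //|ne].
have [f' c'] := foot_spec yM'.
set z' := ft M' in f' c' cM' *.
have c'z : (a ^ g).1 z' = z' by move: cM'; rewrite inAstar => /andP[_ /eqP].
have [N xN zN] : exists2 N, I x N & I z N by apply/collP.
have wN : I w N by rewrite -(G_line gG xN) autI ?G_aut.
have cxw : coll x w by rewrite G_coll.
have wx : w != x.
  apply: contraNneq (foot_nx yM) => e; apply/eqP; apply: (@perm_inj _ g.1).
  by rewrite -/w e G_x.
have ny' : ~~ I y N by apply: contra ny => yN; apply: coll_on xN yN.
have z'N : ~~ I z' N.
  apply/negP => z'N.
  have e : z = z'.
    apply: (ax5P GQ ny' zN _ z'N); first by rewrite coll_sym (coll_on fM yM).
    by rewrite coll_sym (coll_on f' yM').
  move/negP: ne; apply; apply/eqP.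
  have zM' : I z M' by rewrite e.
  exact: (uniqL GQ (foot_ny yM) fM yM zM' yM').
have wM' : ~~ I w M'.
  apply/negP => wM'; have e := foot_uniq yM' wM' cxw.
  by move: z'N; rewrite /z' -e wN.
have [p pM' cwp] := ax5E GQ wM'.
have np : ~~ coll x p.
  apply/negP => cp; have e := foot_uniq yM' pM' cp.
  have cwz : coll z' w by rewrite coll_sym /z' -e.
  have cxz : coll z' x by rewrite coll_sym.
  have := ax5P GQ z'N xN cxz wN cwz.
  by move=> ex; move: wx; rewrite ex eqxx.
case/collP: cwp => l wl pl.
have ne' : M' != l by apply: contraNneq wM' => ->.
have := key2 np pM' pl ne' f' c' wl cxw cG c'z cw.
by move/(subsetP (H_Astar yM)).
Qed.

Lemma Astar_norm M : I y M -> G \subset 'N(Ast M).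
Proof.
move=> yM; apply/subsetP => g gG; rewrite inE; apply/subsetP => c.
rewrite mem_conjg => cM; rewrite -(conjgKV g c).
by apply: conjAstar.
Qed.

Lemma AstarM M M' : I y M -> I y M' -> M != M' -> Ast M * Ast M' = G.
Proof.
move=> yM yM' ne; apply/eqP; rewrite eqEcard mul_subG ?Astar_sub //=.
have := mul_cardG (AstarG M) (AstarG M'); rewrite /= (AstarIE yM yM' ne) cardH => e.
have h : ((s * s * s) * s <= #|(Ast M * Ast M')%g| * s)%N.
  by rewrite -e -mulnA [X in (_ <= X)%N]/= (leq_mul (Astar_card yM) (Astar_card yM')).
rewrite leq_pmul2r ?(s_gt0 GQ) // in h.
exact: leq_trans G_card h.
Qed.

Lemma three_lines : ~~ odd s -> exists M1 M2 M3,
  [/\ I y M1, I y M2, I y M3 & [/\ M1 != M2, M1 != M3 & M2 != M3]].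
Proof.
move=> ev; have s2 : 1 < s by have := s_gt0 GQ; case: s ev => [|[]].
have [M1 y1] := exists_line GQ y.
have [M2 y2 n21] := other_line GQ y M1.
have c := cardsD1 M2 ([set l | I y l] :\ M1).
have m1 : M1 \in [set l | I y l] by rewrite inE.
have m2 : M2 \in [set l | I y l] :\ M1 by rewrite !inE n21 y2.
rewrite (card_minus (ptsz GQ y) m1) m2 /= in c.
have : 0 < #|[set l | I y l] :\ M1 :\ M2| by lia.
case/card_gt0P => M3; rewrite !inE => /and3P[n32 n31 y3].
exists M1, M2, M3; split => //; split; by rewrite eq_sym.
Qed.

Lemma der1H : ~~ odd s -> G^`(1) \subset H.
Proof.
move=> ev; have [M1 [M2 [M3 [y1 y2 y3 [n12 n13 n23]]]]] := three_lines ev.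
have nH : G \subset 'N(H).
  by rewrite -(AstarIE y1 y2 n12); apply: normsI; apply: Astar_norm.
have sN M : Ast M \subset 'N(H) by apply: subset_trans (Astar_sub M) nH.
apply: der1_min nH _.
have cAB M M' : I y M -> I y M' -> M != M' -> Ast M / H \subset 'C(Ast M' / H).
  move=> yM yM' ne; rewrite quotient_cents2 // -(AstarIE yM yM' ne).
  apply: commg_subI.
    by rewrite subsetI subxx (subset_trans (Astar_sub M) (Astar_norm yM')).
  by rewrite subsetI subxx (subset_trans (Astar_sub M') (Astar_norm yM)).
have GQ' M M' : I y M -> I y M' -> M != M' -> G / H = Ast M / H * (Ast M' / H).
  by move=> yM yM' ne; rewrite -{1}(AstarM yM yM' ne) quotientMl ?sN.
rewrite /abelian {1}(GQ' _ _ y1 y2 n12) mul_subG //.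
  by rewrite (GQ' _ _ y2 y3 n23); apply: centsMr; apply: cAB.
by rewrite (GQ' _ _ y1 y3 n13); apply: centsMr; apply: cAB; rewrite // eq_sym.
Qed.

Lemma main_result Mi Mj : ~~ odd s -> I y Mi -> I y Mj ->
  [/\ forall g, g \in U0 I G x y ->
        #|Astar I G x Mi :&: (g *: (G^`(1))%g)%g| = #|(G^`(1))%g| /\
        #|Astab G Mi :&: (g *: (G^`(1))%g)%g| = (if g \in (G^`(1))%g then 1 else 0)%N,
      forall g, g \in U0 I G x y ->
        #|Astar I G x Mi :&: (g ^: G)%g| = #|(g ^: G)%g| /\
        #|Astab G Mi :&: (g ^: G)%g| = (if (g == 1)%g then 1 else 0)%N
    & forall g, g \in Astar I G x Mj :\: U0 I G x y ->
        #|Astar I G x Mi :&: (g ^: G)%g| = (if Mi == Mj then #|(g ^: G)%g| else 0)%N].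
Proof.
move=> ev yMi yMj.
have D := der1H ev.
have U0P g : g \in U0 I G x y -> forall M, I y M -> g \in Ast M.
  by move/bigcapP.
have U0G g : g \in U0 I G x y -> g \in G.
  by move=> gU; apply: (subsetP (Astar_sub Mi)); apply: U0P.
have HU0 : H \subset U0 I G x y.
  by apply/subsetP => h hH; apply/bigcapP => M yM; apply: (subsetP (H_Astar yM)).
have DA M : I y M -> G^`(1) \subset Ast M.
  by move=> yM; apply: subset_trans D (H_Astar yM).
have cosetA M g : I y M -> g \in Ast M -> g *: G^`(1) \subset Ast M.
  move=> yM gM; apply/subsetP => k; rewrite mem_lcoset => kD.
  by rewrite -(mulKVg g k) groupM // (subsetP (DA M yM)).
have classC g : g \in G -> g ^: G \subset g *: G^`(1).
  move=> gG; apply/subsetP => k /imsetP[h hG ->].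
  by rewrite mem_lcoset conjg_mulR mulKg derg1 mem_commg.
have AsbU g M k : I y M -> g \in U0 I G x y -> k \in Asb M -> k \in g *: G^`(1) -> k = 1.
  move=> yM gU kA kC; have [M' yM' ne] := other_yline yM.
  apply: (Astab_U yM yM' ne kA).
  exact: (subsetP (cosetA M' g yM' (U0P g gU M' yM'))).
split.
- move=> g gU; split.
    by rewrite (setIidPr (cosetA Mi g yMi (U0P g gU Mi yMi))) card_lcoset.
  case: ifP => gD.
    have -> : Asb Mi :&: g *: G^`(1) = [set 1].
      apply/eqP; rewrite eqEsubset; apply/andP; split.
        apply/subsetP => k; rewrite in_setI => /andP[kA kC].
        by rewrite (AsbU g Mi k yMi gU kA kC) set11.
      by rewrite sub1set in_setI group1 mem_lcoset mulg1 groupV gD.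
    by rewrite cards1.
  have -> : Asb Mi :&: g *: G^`(1) = set0.
    apply/setP => k; rewrite in_setI in_set0; apply: negbTE; apply/andP => -[kA kC].
    have k1 := AsbU g Mi k yMi gU kA kC.
    by move: kC; rewrite k1 mem_lcoset mulg1 groupV gD.
  by rewrite cards0.
- move=> g gU; have gG := U0G g gU; split.
    by rewrite (setIidPr (subset_trans (classC g gG) (cosetA Mi g yMi (U0P g gU Mi yMi)))).
  have k1 k : k \in Asb Mi :&: g ^: G -> k = 1.
    rewrite in_setI => /andP[kA kC].
    exact: (AsbU g Mi k yMi gU kA (subsetP (classC g gG) k kC)).
  case: eqP => [g1|g1].
    have -> : Asb Mi :&: g ^: G = [set 1].
      apply/eqP; rewrite eqEsubset; apply/andP; split.
        by apply/subsetP => k /k1 ->; rewrite set11.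
      by rewrite sub1set in_setI group1 -{1}g1 class_refl.
    by rewrite cards1.
  have -> : Asb Mi :&: g ^: G = set0.
    apply/setP => k; rewrite in_set0; apply: negbTE; apply/negP => kS.
    have e := k1 k kS; move: kS; rewrite e in_setI => /andP[_ /imsetP[h _ eh]].
    by apply: g1; apply/eqP; rewrite -(conjg_eq1 g h) -eh.
  by rewrite cards0.
- move=> g; rewrite in_setD => /andP[gU gA].
  have gG : g \in G by apply: (subsetP (Astar_sub Mj)).
  case: (eqVneq Mi Mj) => [->|ne].
    by rewrite (setIidPr (subset_trans (classC g gG) (cosetA Mj g yMj gA))).
  apply/eqP; rewrite cards_eq0; apply/eqP/setP => k.
  rewrite in_setI in_set0; apply: negbTE; apply/andP => -[kA kC].
  have kgc := subsetP (classC g gG) k kC.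
  have kA' : k \in Ast Mj := subsetP (cosetA Mj g yMj gA) k kgc.
  have kH : k \in H by apply: (subsetP (AstarI yMi yMj ne)); rewrite in_setI kA kA'.
  move: kgc; rewrite mem_lcoset => /(subsetP D) cH.
  have : g \in H by rewrite -(mulKVg k g) groupM // -(invgK (k^-1 * g)) groupV invMg invgK.
  by move/(subsetP HU0); rewrite (negbTE gU).
Qed.
End Main.

Theorem lemma2p7 (P L : finType) (I : P -> L -> bool) (s : nat)
    (x : P) (G : {group aut_type P L}) (y : P) (Mi Mj : L) :
  is_STGQ I s x G -> ~~ odd s ->
  ~~ coll I x y -> I y Mi -> I y Mj ->
  [/\ forall g, g \in U0 I G x y ->
        #|Astar I G x Mi :&: (g *: (G^`(1))%g)%g| = #|(G^`(1))%g| /\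
        #|Astab G Mi :&: (g *: (G^`(1))%g)%g| = (if g \in (G^`(1))%g then 1 else 0),
      forall g, g \in U0 I G x y ->
        #|Astar I G x Mi :&: (g ^: G)%g| = #|(g ^: G)%g| /\
        #|Astab G Mi :&: (g ^: G)%g| = (if (g == 1)%g then 1 else 0)
    & forall g, g \in Astar I G x Mj :\: U0 I G x y ->
        #|Astar I G x Mi :&: (g ^: G)%g| = (if Mi == Mj then #|(g ^: G)%g| else 0)].
Proof.
move=> [[GQ elG regG] [H [HG cH symH]]] ev ny yMi yMj.
exact: (main_result GQ elG regG HG cH symH ny ev yMi yMj).
Qed.
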